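(* Let $\alpha$ be a countably infinite order type and $S$ a sierpinskisation of $\alpha$ and $\omega$. Then the join-semilattice $I_{<\omega}(S)$ is isomorphic to a join-subsemilattice of $[\omega]^{<\omega}$ and belongs to $\mathbb{J}_\alpha$, i.e. the lattice $J(I_{<\omega}(S))$ of ideals of $I_{<\omega}(S)$ contains a chain of order type $I(\alpha)$.
   Context: A sierpinskisation of a countable order type $\alpha$ and $\omega$ is a poset $(S,\le)$ whose order is the intersection of two linear orders on $S$, one of type $\alpha$ and one of type $\omega$. $I_{<\omega}(S)$ is the set of finitely generated initial segments of $S$ ordered by inclusion (join $=$ union). $[\omega]^{<\omega}$ is the set of finite subsets of $\mathbb{N}$ ordered by inclusion. An ideal is a non-empty up-directed initial segment; $J(\cdot)$ is the set of ideals ordered by inclusion. $\mathbb{J}_\alpha$ is the class of join-semilattices $P$ with a least element such that $J(P)$ contains a chain of type $I(\alpha)$, where $I(\alpha)$ is the order type of the chain of initial segments of a chain of type $\alpha$. *)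

(* Defs.v *)
(* Sets are predicates (X : T -> Prop), compared with Leibniz
   equality (functional/propositional extensionality are available). *)
From Stdlib Require Import List Arith.
Import ListNotations.

Definition subset {T : Type} (X Y : T -> Prop) : Prop := forall x, X x -> Y x.
Definition union {T : Type} (X Y : T -> Prop) : T -> Prop := fun x => X x \/ Y x.

Definition linear_order {T : Type} (le : T -> T -> Prop) : Prop :=
  (forall x, le x x) /\
  (forall x y, le x y -> le y x -> x = y) /\
  (forall x y z, le x y -> le y z -> le x z) /\
  (forall x y, le x y \/ le y x).

Definition bijective {A B : Type} (f : A -> B) : Prop :=
  (forall x y, f x = f y -> x = y) /\ (forall b, exists a, f a = b).

Definition same_order_type {T U : Type} (leT : T -> T -> Prop)
  (leU : U -> U -> Prop) : Prop :=
  exists f : T -> U, bijective f /\ forall x y, leT x y <-> leU (f x) (f y).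

Definition countably_infinite (A : Type) : Prop :=
  exists h : nat -> A, bijective h.

(* The poset order of a sierpinskisation: intersection of two linear orders *)
Definition inter_order {T : Type} (le1 le2 : T -> T -> Prop) : T -> T -> Prop :=
  fun x y => le1 x y /\ le2 x y.

Definition initial_segment {T : Type} (le : T -> T -> Prop) (X : T -> Prop) : Prop :=
  forall x y, le x y -> X y -> X x.

Definition down_of {T : Type} (le : T -> T -> Prop) (s : list T) : T -> Prop :=
  fun x => exists y, In y s /\ le x y.

Definition fg_initial {T : Type} (le : T -> T -> Prop) (X : T -> Prop) : Prop :=
  exists s : list T, X = down_of le s.

Definition finite_nat (X : nat -> Prop) : Prop :=
  exists n, forall k, X k -> k < n.

Definition ideal {E : Type} (P : E -> Prop) (le : E -> E -> Prop)
  (D : E -> Prop) : Prop :=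
  (forall a, D a -> P a) /\
  (exists a, D a) /\
  (forall a b, P a -> le a b -> D b -> D a) /\
  (forall a b, D a -> D b -> exists c, D c /\ le a c /\ le b c).

(* Main.v *)
Require Import Defs.
From Stdlib Require Import List Arith Lia FunctionalExtensionality PropExtensionality.
Import ListNotations.

Lemma in_le_max (T : Type) (g : T -> nat) (s : list T) y :
  In y s -> g y <= fold_right max 0 (map g s).
Proof.
  induction s as [|a s IH]; simpl; [tauto|].
  intros [->|H]; [lia|]. specialize (IH H). lia.
Qed.

Theorem lemma2p1
  (A : Type) (leA : A -> A -> Prop)
  (HleA : linear_order leA) (HA : countably_infinite A)
  (T : Type) (le1 le2 : T -> T -> Prop)
  (Hle1 : linear_order le1) (Hle2 : linear_order le2)
  (H1 : same_order_type le1 leA) (H2 : same_order_type le2 Nat.le) :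
  let FG := fg_initial (inter_order le1 le2) in
  (* I_{<omega}(S) embeds as a join-subsemilattice of [omega]^{<omega} *)
  (exists phi : (T -> Prop) -> (nat -> Prop),
      (forall I, FG I -> finite_nat (phi I)) /\
      (forall I J, FG I -> FG J -> phi (union I J) = union (phi I) (phi J)) /\
      (forall I J, FG I -> FG J -> phi I = phi J -> I = J)) /\
  (* J(I_{<omega}(S)) contains a chain of type I(alpha) *)
  (exists psi : (A -> Prop) -> ((T -> Prop) -> Prop),
      (forall X, initial_segment leA X -> ideal FG subset (psi X)) /\
      (forall X Y, initial_segment leA X -> initial_segment leA Y ->
         (subset X Y <-> subset (psi X) (psi Y)))).
Proof.
  intros FG.
  destruct H2 as [g [[ginj gsurj] gmon]].
  destruct H1 as [f [[finj fsurj] fmon]].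
  destruct Hle1 as [r1 _]. destruct Hle2 as [r2 _].
  split.
  - exists (fun I n => exists x, I x /\ g x = n).
    split; [|split].
    + intros I [s ->].
      exists (S (fold_right max 0 (map g s))).
      intros k [x [[y [Hy [_ Hxy]]] <-]].
      apply gmon in Hxy. pose proof (in_le_max T g s y Hy). lia.
    + intros I J _ _. extensionality n. apply propositional_extensionality.
      unfold union. split.
      * intros [x [[Hx|Hx] <-]]; [left|right]; eauto.
      * intros [[x [Hx <-]]|[x [Hx <-]]]; exists x; auto.
    + intros I J _ _ E. extensionality x. apply propositional_extensionality.
      split; intro Hx.
      * assert (HH : exists y, J y /\ g y = g x).
        { pose proof (equal_f E (g x)) as E'; simpl in E'; rewrite <- E'. eauto. }
        destruct HH as [y [Hy Hyx]]. apply ginj in Hyx. subst; auto.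
      * assert (HH : exists y, I y /\ g y = g x).
        { pose proof (equal_f E (g x)) as E'; simpl in E'; rewrite E'. eauto. }
        destruct HH as [y [Hy Hyx]]. apply ginj in Hyx. subst; auto.
  - exists (fun X I => FG I /\ subset I (fun t => X (f t))).
    split.
    + intros X HX. split; [|split; [|split]].
      * intros a [Ha _]; exact Ha.
      * exists (fun _ => False). split.
        -- exists nil. extensionality x. apply propositional_extensionality.
           unfold down_of; simpl. split; [tauto|]. intros [y [[] _]].
        -- intros x [].
      * intros a b Pa Hab [_ Hb]. split; [exact Pa|].
        intros x Hx. apply Hb, Hab, Hx.
      * intros a b [[s Hs] Ha] [[t Ht] Hb].
        exists (union a b). split; [split|split].
        -- exists (s ++ t). subst. extensionality x.
           apply propositional_extensionality. unfold union, down_of.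
           split.
           ++ intros [[y [Hy H]]|[y [Hy H]]]; exists y; rewrite in_app_iff; auto.
           ++ intros [y [Hy H]]. rewrite in_app_iff in Hy.
              destruct Hy; [left|right]; eauto.
        -- intros x [Hx|Hx]; auto.
        -- intros x Hx; left; auto.
        -- intros x Hx; right; auto.
    + intros X Y HX HY. split.
      * intros HXY I [HI HIX]. split; [exact HI|]. intros x Hx. apply HXY, HIX, Hx.
      * intros Hps a Ha. destruct (fsurj a) as [t <-].
        assert (Hd : FG (down_of (inter_order le1 le2) [t])
                  /\ subset (down_of (inter_order le1 le2) [t]) (fun z => X (f z))).
        { split. exists [t]. reflexivity.
          intros z [y [[<-|[]] [Hz1 _]]]. apply fmon in Hz1. eapply HX; eauto. }
        destruct (Hps _ Hd) as [_ HY'].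
        apply HY'. exists t. split; [left; auto|]. split; auto.
Qed.
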